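(* Let $D\subset\Phi^+$ be an orthogonal subset with $D\cap\mathcal C_1=\{\varepsilon_1-\varepsilon_j\}$ for some $1<j\le n$. Let $\tilde\Phi^+$ be the set of roots of $\Phi^+$ involving neither $\varepsilon_1$ nor $\varepsilon_j$ (i.e. $\tilde\Phi^+=\Phi^+\setminus(\mathcal C_1\cup\mathcal C_j\cup\mathcal R_j\cup\mathcal R_{-j})$), $\tilde D=D\cap\tilde\Phi^+$, $\tilde\sigma=\prod_{\beta\in\tilde D}r_\beta$, and $l'(\tilde\sigma)=\#\{\alpha\in\tilde\Phi^+:\tilde\sigma(\alpha)\notin\tilde\Phi^+\}$ (the length of $\tilde\sigma$ in the Weyl group of the root system $\tilde\Phi=\tilde\Phi^+\cup-\tilde\Phi^+$, which has the same type as $\Phi$ and rank $n-2$). Then $l(\sigma)=l'(\tilde\sigma)+|S(\varepsilon_1-\varepsilon_j)|+1$.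
   Context: Let $\Phi$ be a root system of type $B_n$, $C_n$ or $D_n$ in $\mathbb R^n$ with standard basis $\varepsilon_1,\dots,\varepsilon_n$ and positive roots $\Phi^+=\{\varepsilon_i\pm\varepsilon_j:1\le i<j\le n\}\cup\Phi_1^+$, where $\Phi_1^+=\emptyset$ for $D_n$, $\{\varepsilon_i\}$ for $B_n$, $\{2\varepsilon_i\}$ for $C_n$. $D\subset\Phi^+$ is orthogonal if its roots are pairwise orthogonal. $r_\beta$ denotes the reflection in the hyperplane orthogonal to $\beta$, $\sigma=\prod_{\beta\in D}r_\beta$, and $l(\sigma)=\#\{\alpha\in\Phi^+:\sigma(\alpha)\in-\Phi^+\}$ (the length of $\sigma$ in the Weyl group). $\mathrm{col}(\varepsilon_i\pm\varepsilon_j)=\mathrm{col}(\varepsilon_i)=\mathrm{col}(2\varepsilon_i)=i$; $\mathrm{row}(\varepsilon_i\pm\varepsilon_j)=\mp j$, $\mathrm{row}(\varepsilon_i)=0$, $\mathrm{row}(2\varepsilon_i)=-i$; $\mathcal R_i=\{\alpha\in\Phi^+:\mathrm{row}(\alpha)=i\}$, $\mathcal C_j=\{\alpha\in\Phi^+:\mathrm{col}(\alpha)=j\}$. For $\beta\in\Phi^+$, $S(\beta)=\{\alpha\in\Phi^+:\beta-\alpha\in\Phi^+\}$. *)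

(* Defs.v *)
From HB Require Import structures.
From mathcomp Require Import all_boot all_order all_algebra.
Unset Printing Implicit Defensive.
Import Order.TTheory GRing.Theory Num.Theory.

Inductive rtype := TypeB | TypeC | TypeD.

(* Positive roots, with 1-based indices as in the paper:
   PM i j = eps_i - eps_j,  PP i j = eps_i + eps_j  (i < j),
   PS i = eps_i (type B),   PL i = 2 eps_i (type C). *)
Inductive proot := PM of nat & nat | PP of nat & nat | PS of nat | PL of nat.

Definition proot_enc (r : proot) : nat * nat * nat :=
  match r with
  | PM i j => (0, i, j) | PP i j => (1, i, j) | PS i => (2, i, 0) | PL i => (3, i, 0)
  end%N.
Definition proot_dec (x : nat * nat * nat) : option proot :=
  match x with
  | (0, i, j) => Some (PM i j) | (1, i, j) => Some (PP i j)
  | (2, i, _) => Some (PS i) | (3, i, _) => Some (PL i) | _ => None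
  end%N.
Lemma proot_encK : pcancel proot_enc proot_dec. Proof. by case. Qed.
HB.instance Definition _ := Equality.copy proot (pcan_type proot_encK).

Definition idx_pairs (n : nat) : seq (nat * nat) :=
  [seq (i, j) | i <- iota 1 n, j <- [seq j <- iota 1 n | (i < j)%N]].

Definition posroots (t : rtype) (n : nat) : seq proot :=
  [seq PM p.1 p.2 | p <- idx_pairs n] ++ [seq PP p.1 p.2 | p <- idx_pairs n] ++
  match t with
  | TypeB => [seq PS i | i <- iota 1 n]
  | TypeC => [seq PL i | i <- iota 1 n]
  | TypeD => [::]
  end.

Local Open Scope ring_scope.

(* standard basis vector eps_i (1-based) of Q^n *)
Definition eps (n i : nat) : 'rV[rat]_n := \row_(k < n) ((k.+1 == i)%:R).

Definition vec (n : nat) (r : proot) : 'rV[rat]_n :=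
  match r with
  | PM i j => eps n i - eps n j
  | PP i j => eps n i + eps n j
  | PS i => eps n i
  | PL i => 2%:R *: eps n i
  end.

Definition dot (n : nat) (u v : 'rV[rat]_n) : rat := \sum_(k < n) u 0 k * v 0 k.

Definition refl (n : nat) (b v : 'rV[rat]_n) : 'rV[rat]_n :=
  v - ((2%:R * dot n v b) / dot n b b) *: b.

Definition sigma (n : nat) (D : seq proot) (v : 'rV[rat]_n) : 'rV[rat]_n :=
  foldr (fun b w => refl n (vec n b) w) v D.

Definition orthogonal_subset (t : rtype) (n : nat) (D : seq proot) : bool :=
  [&& uniq D, all (fun a => a \in posroots t n) D &
      pairwise (fun a b => dot n (vec n a) (vec n b) == 0) D].

Definition length_sigma (t : rtype) (n : nat) (D : seq proot) : nat :=
  count (fun a => sigma n D (vec n a) \in [seq - vec n b | b <- posroots t n])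
        (posroots t n).

Definition col (r : proot) : nat :=
  match r with PM i _ => i | PP i _ => i | PS i => i | PL i => i end.
Definition row (r : proot) : int :=
  match r with
  | PM _ j => Posz j | PP _ j => - Posz j | PS _ => 0 | PL i => - Posz i
  end.

Definition Rrow (t : rtype) (n : nat) (i : int) : seq proot :=
  [seq a <- posroots t n | row a == i].
Definition Ccol (t : rtype) (n : nat) (j : nat) : seq proot :=
  [seq a <- posroots t n | col a == j].

Definition Sset (t : rtype) (n : nat) (beta : proot) : seq proot :=
  [seq a <- posroots t n | vec n beta - vec n a \in [seq vec n b | b <- posroots t n]].

Definition tposroots (t : rtype) (n j : nat) : seq proot :=
  [seq a <- posroots t n | [&& a \notin Ccol t n 1, a \notin Ccol t n j,
                               a \notin Rrow t n (Posz j) & a \notin Rrow t n (- Posz j)]].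

Definition length_tilde (t : rtype) (n j : nat) (Dt : seq proot) : nat :=
  count (fun a => sigma n Dt (vec n a) \notin [seq vec n b | b <- tposroots t n j])
        (tposroots t n j).

(* Main.v *)
Require Import Defs.
From HB Require Import structures.
From mathcomp Require Import all_boot all_order all_algebra.
Import Order.TTheory GRing.Theory Num.Theory.

Section Vec.
Local Open Scope ring_scope.
Variable n : nat.

Definition cf (v : 'rV[rat]_n) (m : nat) : rat := dot n (eps n m) v.

Lemma dotC u v : dot n u v = dot n v u.
Proof. by apply: eq_bigr => k _; rewrite mulrC. Qed.

Lemma dotDl u v w : dot n (u + v) w = dot n u w + dot n v w.
Proof. by rewrite /dot -big_split; apply: eq_bigr => k _; rewrite mxE mulrDl. Qed.

Lemma dotNl u w : dot n (- u) w = - dot n u w.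
Proof. by rewrite /dot -sumrN; apply: eq_bigr => k _; rewrite mxE mulNr. Qed.

Lemma dotZl c u w : dot n (c *: u) w = c * dot n u w.
Proof. by rewrite /dot mulr_sumr; apply: eq_bigr => k _; rewrite mxE mulrA. Qed.

Lemma dotDr u v w : dot n w (u + v) = dot n w u + dot n w v.
Proof. by rewrite dotC dotDl !(dotC w). Qed.
Lemma dotNr u w : dot n w (- u) = - dot n w u.
Proof. by rewrite dotC dotNl dotC. Qed.
Lemma dotZr c u w : dot n w (c *: u) = c * dot n w u.
Proof. by rewrite dotC dotZl dotC. Qed.

Lemma cfD u v m : cf (u + v) m = cf u m + cf v m. Proof. exact: dotDr. Qed.
Lemma cfN u m : cf (- u) m = - cf u m. Proof. exact: dotNr. Qed.
Lemma cfZ c u m : cf (c *: u) m = c * cf u m. Proof. exact: dotZr. Qed.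
Lemma cfB u v m : cf (u - v) m = cf u m - cf v m. Proof. by rewrite cfD cfN. Qed.

Lemma dot_eps i m : dot n (eps n m) (eps n i) = ((i == m) && (0 < m <= n)%N)%:R.
Proof.
rewrite /dot.
case: (ltnP 0 m) => [m0|]; last first.
  rewrite leqn0 => /eqP ->; rewrite big1 ?andbF // => k _; rewrite !mxE.
  by rewrite mul0r.
case: (leqP m n) => [mn|nm]; last first.
  rewrite big1 ?andbF // => k _; rewrite !mxE.
  have : (k.+1 == m) = false.
    by apply/negbTE; rewrite neq_ltn (leq_ltn_trans (ltn_ord k) nm).
  by move=> ->; rewrite mul0r.
have km : (m.-1 < n)%N by rewrite prednK.
rewrite (bigD1 (Ordinal km)) //= big1 ?addr0.
  by rewrite !mxE /= prednK // eqxx mul1r ?andbT eq_sym.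
move=> k /eqP nk; rewrite !mxE.
have : (k.+1 == m) = false.
  apply/negbTE/negP => /eqP e; apply: nk; apply: val_inj => /=; by rewrite -e.
by move=> ->; rewrite mul0r.
Qed.

Lemma cf_eps i m : cf (eps n i) m = ((i == m) && (0 < m <= n)%N)%:R.
Proof. exact: dot_eps. Qed.

Lemma cf_epsr i m : (0 < i <= n)%N -> cf (eps n i) m = (i == m)%:R.
Proof. by move=> hi; rewrite cf_eps; case: eqP => // <-; rewrite hi. Qed.

Lemma cf_ext u v : (forall m, (0 < m <= n)%N -> cf u m = cf v m) -> u = v.
Proof.
move=> H; apply/rowP => k; rewrite [u]row_sum_delta [v]row_sum_delta.
have := H k.+1; rewrite ltn_ord /= => /(_ isT).
rewrite /cf /dot.
have E (w : 'rV[rat]_n) : \sum_(k0 < n) eps n k.+1 0 k0 * w 0 k0 = w 0 k.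
  rewrite (bigD1 k) //= big1 ?addr0.
    by rewrite mxE eqxx mul1r.
  move=> k' nk; rewrite mxE.
  have : (k'.+1 == k.+1) = false by apply/negbTE.
  by move=> ->; rewrite mul0r.
rewrite !E => e.
by rewrite -!row_sum_delta e.
Qed.

End Vec.

Section Roots.
Variable t : rtype.
Variable n : nat.

Lemma mem_idx a c : ((a, c) \in idx_pairs n) = [&& 0 < a, a < c & c <= n].
Proof.
apply/allpairsPdep/idP => [[x [y [hx hy [-> ->]]]]|].
  move: hy; rewrite mem_filter mem_iota => /andP [-> /andP [y1 yn]].
  move: hx; rewrite mem_iota => /andP [x1 _].
  by rewrite x1 /=; rewrite add1n ltnS in yn.
move=> /and3P [a0 ac cn]; exists a, c; split => //.
  by rewrite mem_iota a0 add1n ltnS (leq_trans (ltnW ac) cn).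
by rewrite mem_filter ac mem_iota add1n ltnS cn (leq_trans a0 (ltnW ac)).
Qed.

Lemma inj_PM : injective (fun p : nat * nat => PM p.1 p.2).
Proof. by move=> [? ?] [? ?] [-> ->]. Qed.
Lemma inj_PP : injective (fun p : nat * nat => PP p.1 p.2).
Proof. by move=> [? ?] [? ?] [-> ->]. Qed.

Definition shorts : seq proot :=
  match t with
  | TypeB => [seq PS i | i <- iota 1 n]
  | TypeC => [seq PL i | i <- iota 1 n]
  | TypeD => [::]
  end.

Lemma posrootsE : posroots t n =
  [seq PM p.1 p.2 | p <- idx_pairs n] ++ [seq PP p.1 p.2 | p <- idx_pairs n] ++ shorts.
Proof. by []. Qed.

Lemma memPM a c : (PM a c \in posroots t n) = [&& 0 < a, a < c & c <= n].
Proof.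
rewrite posrootsE !mem_cat.
rewrite (mem_map inj_PM _ (a, c)) mem_idx.
have -> : (PM a c \in [seq PP p.1 p.2 | p <- idx_pairs n]) = false.
  by apply/negbTE/mapP => [[? _]].
have -> : (PM a c \in shorts) = false.
  by rewrite /shorts; case: t => //; apply/negbTE/mapP => [[? _]].
by rewrite !orbF.
Qed.

Lemma memPP a c : (PP a c \in posroots t n) = [&& 0 < a, a < c & c <= n].
Proof.
rewrite posrootsE !mem_cat.
rewrite (mem_map inj_PP _ (a, c)) mem_idx.
have -> : (PP a c \in [seq PM p.1 p.2 | p <- idx_pairs n]) = false.
  by apply/negbTE/mapP => [[? _]].
have -> : (PP a c \in shorts) = false.
  by rewrite /shorts; case: t => //; apply/negbTE/mapP => [[? _]].
by rewrite !orbF.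
Qed.

Lemma memPS a : (PS a \in posroots t n) = (if t is TypeB then 0 < a <= n else false).
Proof.
rewrite posrootsE !mem_cat.
have -> : (PS a \in [seq PM p.1 p.2 | p <- idx_pairs n]) = false.
  by apply/negbTE/mapP => [[? _]].
have -> : (PS a \in [seq PP p.1 p.2 | p <- idx_pairs n]) = false.
  by apply/negbTE/mapP => [[? _]].
rewrite /shorts; case: t => //=.
- by rewrite (mem_map (fun x y (e : PS x = PS y) => let: erefl := e in erefl)) mem_iota add1n ltnS.
- by apply/negbTE/mapP => [[? _]].
Qed.

Lemma memPL a : (PL a \in posroots t n) = (if t is TypeC then 0 < a <= n else false).
Proof.
rewrite posrootsE !mem_cat.
have -> : (PL a \in [seq PM p.1 p.2 | p <- idx_pairs n]) = false.
  by apply/negbTE/mapP => [[? _]].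
have -> : (PL a \in [seq PP p.1 p.2 | p <- idx_pairs n]) = false.
  by apply/negbTE/mapP => [[? _]].
rewrite /shorts; case: t => //=.
- by apply/negbTE/mapP => [[? _]].
- by rewrite (mem_map (fun x y (e : PL x = PL y) => let: erefl := e in erefl)) mem_iota add1n ltnS.
Qed.

End Roots.

Definition idx2 (b : proot) : nat :=
  match b with PM _ c => c | PP _ c => c | PS a => a | PL a => a end.

Definition aperm (b : proot) (x : nat) : nat :=
  match b with
  | PM a c | PP a c => if x == a then c else if x == c then a else x
  | _ => x
  end.
Definition aneg (b : proot) (x : nat) : bool :=
  match b with
  | PM a c => false
  | PP a c => (x == a) || (x == c)
  | PS a | PL a => x == a
  end.

Fixpoint ip (L : seq proot) (x : nat) : nat :=
  if L is b :: L' then aperm b (ip L' x) else x.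
Fixpoint isg (L : seq proot) (x : nat) : bool :=
  if L is b :: L' then isg L' x (+) aneg b (ip L' x) else false.

Lemma ip_cat L1 L2 x : ip (L1 ++ L2) x = ip L1 (ip L2 x).
Proof. by elim: L1 => //= b L1 ->. Qed.
Lemma is_cat L1 L2 x : isg (L1 ++ L2) x = isg L2 x (+) isg L1 (ip L2 x).
Proof. by elim: L1 => /= [|b L1 ->]; rewrite ?addbF // ip_cat addbA. Qed.

Definition combine (p q : bool * nat) : bool * proot :=
  let: (s, x) := p in let: (u, y) := q in
  if (x < y)%N then (s, if s == u then PP x y else PM x y)
  else (u, if s == u then PP y x else PM y x).

Definition simg L (p : bool * nat) : bool * nat := (p.1 (+) isg L p.2, ip L p.2).

Definition rimg L (b : proot) : bool * proot :=
  match b with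
  | PM a c => combine (simg L (false, a)) (simg L (true, c))
  | PP a c => combine (simg L (false, a)) (simg L (false, c))
  | PS a => (isg L a, PS (ip L a))
  | PL a => (isg L a, PL (ip L a))
  end.

Section Refl.
Local Open Scope ring_scope.
Variable t : rtype.
Variable n : nat.

Definition sv (p : bool * nat) : 'rV[rat]_n := if p.1 then - eps n p.2 else eps n p.2.
Definition sgnv (p : bool * proot) : 'rV[rat]_n := if p.1 then - vec n p.2 else vec n p.2.

Lemma cf_sv p m : cf n (sv p) m = (if p.1 then -1 else 1) * cf n (eps n p.2) m.
Proof. by rewrite /sv; case: p.1; rewrite ?cfN ?mulN1r ?mul1r. Qed.

Lemma dot_sv p w : dot n (sv p) w = (if p.1 then -1 else 1) * cf n w p.2.
Proof. by rewrite /sv /cf; case: p.1; rewrite ?dotNl ?mulN1r ?mul1r. Qed.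

Lemma dot_vecl b w : dot n (vec n b) w =
  match b with
  | PM a c => cf n w a - cf n w c
  | PP a c => cf n w a + cf n w c
  | PS a => cf n w a
  | PL a => 2%:R * cf n w a
  end.
Proof. by case: b => * /=; rewrite ?dotDl ?dotNl ?dotZl. Qed.


Lemma cf_vec b m : b \in posroots t n -> cf n (vec n b) m =
  match b with
  | PM a c => (a == m)%:R - (c == m)%:R
  | PP a c => (a == m)%:R + (c == m)%:R
  | PS a => (a == m)%:R
  | PL a => 2%:R * (a == m)%:R
  end.
Proof.
case: b => [a c|a c|a|a] /=; rewrite ?memPM ?memPP ?memPS ?memPL.
- move=> /and3P [a0 ac cn].
  rewrite cfB !cf_epsr // ?a0 ?(leq_trans (ltnW ac) cn) ?cn ?andbT //.
  exact: (leq_trans a0 (ltnW ac)).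
- move=> /and3P [a0 ac cn].
  rewrite cfD !cf_epsr // ?a0 ?(leq_trans (ltnW ac) cn) ?cn ?andbT //.
  exact: (leq_trans a0 (ltnW ac)).
- by case: t => // h; rewrite cf_epsr.
- by case: t => // h; rewrite cfZ cf_epsr.
Qed.

Lemma dot_vv b : b \in posroots t n -> dot n (vec n b) (vec n b) =
  match b with PS _ => 1 | PL _ => 4%:R | _ => 2%:R end.
Proof.
case: b => [a c|a c|a|a] hb; rewrite dot_vecl !(cf_vec _ _ hb) /=;
  move: hb; rewrite ?memPM ?memPP; last 2 first.
- by rewrite eqxx.
- by rewrite eqxx.
- move=> /and3P [_ ac _]; rewrite !eqxx (ltn_eqF ac) eq_sym (ltn_eqF ac).
  by [].
- move=> /and3P [_ ac _]; rewrite !eqxx (ltn_eqF ac) eq_sym (ltn_eqF ac).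
  by [].
Qed.

Lemma refl_sv b s x : b \in posroots t n ->
  refl n (vec n b) (sv (s, x)) = sv (s (+) aneg b x, aperm b x).
Proof.
move=> hb; apply: cf_ext => m hm.
rewrite /refl cfB cfZ dot_sv (dot_vv _ hb) !cf_sv !cf_eps hm !andbT /=.
rewrite !(cf_vec _ _ hb).
move: hb; case: b => [a c|a c|a|a] /=; rewrite ?memPM ?memPP ?memPS ?memPL.
- move=> /and3P [a0 ac cn].
  case: (eqVneq x a) => [->|xa].
    rewrite ?eqxx ?(ltn_eqF ac) ?(gtn_eqF ac).
    by case: s; case: (a == m); case: (c == m).
  case: (eqVneq x c) => [->|xc].
    rewrite ?eqxx ?(ltn_eqF ac) ?(gtn_eqF ac).
    by case: s; case: (a == m); case: (c == m).
  rewrite ?(negbTE xa) ?(negbTE xc) ?(eq_sym c x) ?(negbTE xc).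
  by case: s; case: (a == m); case: (c == m); case: (x == m).
- move=> /and3P [a0 ac cn].
  case: (eqVneq x a) => [->|xa].
    rewrite ?eqxx ?(ltn_eqF ac) ?(gtn_eqF ac).
    by case: s; case: (a == m); case: (c == m).
  case: (eqVneq x c) => [->|xc].
    rewrite ?eqxx ?(ltn_eqF ac) ?(gtn_eqF ac) ?orbT.
    by case: s; case: (a == m); case: (c == m).
  rewrite ?(negbTE xa) ?(negbTE xc) ?(eq_sym c x) ?(negbTE xc).
  by case: s; case: (a == m); case: (c == m); case: (x == m).
- move=> _; case: (eqVneq x a) => [->|xa].
    rewrite ?eqxx.
    by case: s; case: (a == m).
  rewrite ?(negbTE xa).
  by case: s; case: (x == m); case: (a == m).
- move=> _; case: (eqVneq x a) => [->|xa].
    rewrite ?eqxx.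
    by case: s; case: (a == m).
  rewrite ?(negbTE xa).
  by case: s; case: (x == m); case: (a == m).
Qed.

Lemma reflD w u v : refl n w (u + v) = refl n w u + refl n w v.
Proof.
rewrite /refl dotDl mulrDr mulrDl scalerDl opprD.
by rewrite addrACA.
Qed.

Lemma reflZ w c u : refl n w (c *: u) = c *: refl n w u.
Proof.
rewrite /refl dotZl scalerBr scalerA.
congr (_ - _ *: _); by rewrite !mulrA (mulrC 2 c).
Qed.

Lemma reflN w u : refl n w (- u) = - refl n w u.
Proof. by rewrite -scaleN1r reflZ scaleN1r. Qed.

Lemma sigmaD L u v : sigma n L (u + v) = sigma n L u + sigma n L v.
Proof. by elim: L => //= b L IH; rewrite IH reflD. Qed.
Lemma sigmaZ L c u : sigma n L (c *: u) = c *: sigma n L u.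
Proof. by elim: L => //= b L IH; rewrite IH reflZ. Qed.
Lemma sigmaN L u : sigma n L (- u) = - sigma n L u.
Proof. by elim: L => //= b L IH; rewrite IH reflN. Qed.

Lemma sigma_sv L p : all (fun b => b \in posroots t n) L ->
  sigma n L (sv p) = sv (simg L p).
Proof.
case: p => s x; rewrite /simg /=.
elim: L => [|b L IH] /=; first by rewrite addbF.
move=> /andP [hb hL]; rewrite IH // refl_sv //.
by rewrite addbA.
Qed.

Lemma sv_combine p q : sv p + sv q = sgnv (combine p q).
Proof.
case: p q => [s x] [u y]; rewrite /combine /sgnv /sv /=.
case: (ltnP x y) => _; case: s; case: u => /=.
- by rewrite opprD.
- by rewrite opprB addrC.
- by [].
- by [].
- by rewrite opprD addrC.
- by rewrite addrC.
- by rewrite opprB.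
- by rewrite addrC.
Qed.

Lemma sigma_vec L b : all (fun b => b \in posroots t n) L ->
  sigma n L (vec n b) = sgnv (rimg L b).
Proof.
move=> hL; case: b => [a c|a c|a|a].
- rewrite (_ : vec n (PM a c) = sv (false, a) + sv (true, c)) //.
  by rewrite sigmaD !sigma_sv // sv_combine.
- rewrite (_ : vec n (PP a c) = sv (false, a) + sv (false, c)) //.
  by rewrite sigmaD !sigma_sv // sv_combine.
- rewrite (_ : vec n (PS a) = sv (false, a)) //.
  by rewrite sigma_sv // /sgnv /sv /simg /=.
- rewrite (_ : vec n (PL a) = 2%:R *: sv (false, a)) //.
  rewrite sigmaZ sigma_sv // /sgnv /sv /simg /=.
  by case: (isg L a); rewrite ?scalerN.
Qed.

End Refl.

Section Lead.
Local Open Scope ring_scope.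
Variable t : rtype.
Variable n : nat.

Lemma root_range b : b \in posroots t n ->
  [&& (0 < Defs.col b)%N, (Defs.col b <= idx2 b)%N, (idx2 b <= n)%N &
      (Defs.col b == idx2 b) ==> (match b with PS _ | PL _ => true | _ => false end)].
Proof.
case: b => [a c|a c|a|a] /=; rewrite ?memPM ?memPP ?memPS ?memPL.
- by move=> /and3P [-> ac ->]; rewrite (ltnW ac) (ltn_eqF ac).
- by move=> /and3P [-> ac ->]; rewrite (ltn_eqF ac) (ltnW ac).
- by case: t => // /andP [h1 h2]; rewrite h1 h2 leqnn implybT.
- by case: t => // /andP [h1 h2]; rewrite h1 h2 leqnn implybT.
Qed.

Lemma support b m : b \in posroots t n -> cf n (vec n b) m != 0 ->
  (m == Defs.col b) || (m == idx2 b).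
Proof.
move=> hb; rewrite (cf_vec _ _ _ _ hb); case: b hb => [a c|a c|a|a] /= _.
- by rewrite !(eq_sym m); case: (a == m); case: (c == m).
- by rewrite !(eq_sym m); case: (a == m); case: (c == m).
- by rewrite !(eq_sym m); case: (a == m).
- by rewrite !(eq_sym m); case: (a == m).
Qed.

Lemma lead_pos b : b \in posroots t n -> 0 < cf n (vec n b) (Defs.col b).
Proof.
move=> hb; rewrite (cf_vec _ _ _ _ hb); move: hb.
case: b => [a c|a c|a|a] /=; rewrite ?memPM ?memPP ?eqxx.
- by move=> /and3P [_ ac _]; rewrite (gtn_eqF ac).
- by move=> /and3P [_ ac _]; rewrite (gtn_eqF ac).
- by [].
- by [].
Qed.

Lemma low_zero b m : b \in posroots t n -> (m < Defs.col b)%N -> cf n (vec n b) m = 0.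
Proof.
move=> hb hm; apply/eqP; apply: contraTT hm => /(support _ _ hb).
have /and4P [_ ci _ _] := root_range _ hb.
by case/orP => /eqP ->; rewrite -leqNgt.
Qed.

Lemma nonneg_low b m : b \in posroots t n -> (m <= Defs.col b)%N -> 0 <= cf n (vec n b) m.
Proof.
move=> hb; rewrite leq_eqVlt => /orP [/eqP ->|hm].
  exact: ltW (lead_pos _ hb).
by rewrite low_zero.
Qed.

Lemma nocross b b' : b \in posroots t n -> b' \in posroots t n ->
  vec n b <> - vec n b'.
Proof.
have H : forall b b', b \in posroots t n -> b' \in posroots t n ->
    (Defs.col b <= Defs.col b')%N -> vec n b <> - vec n b'.
  move=> x y hx hy le e.
  have := lead_pos _ hx; rewrite e cfN oppr_gt0 ltNge.
  by rewrite nonneg_low.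
move=> hb hb'; case: (leqP (Defs.col b) (Defs.col b')) => le; first exact: H.
move=> e; apply: (H b' b hb' hb (ltnW le)).
by rewrite e opprK.
Qed.

Lemma mem_negroots b s : b \in posroots t n ->
  (sgnv n (s, b) \in [seq - vec n b' | b' <- posroots t n]) = s.
Proof.
move=> hb; rewrite /sgnv /=; case: s.
  by apply/mapP; exists b.
apply/negbTE/mapP => [[b' hb' e]]; exact: (nocross _ _ hb hb' e).
Qed.

Lemma mem_posroots_sub (L : seq proot) b s : {subset L <= posroots t n} -> b \in L ->
  (sgnv n (s, b) \in [seq vec n b' | b' <- L]) = ~~ s.
Proof.
move=> sub hb; rewrite /sgnv /=; case: s => /=.
  apply/negbTE/mapP => [[b' hb' e]].
  apply: (nocross _ _ (sub _ hb') (sub _ hb)); by rewrite -e.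
by apply/mapP; exists b.
Qed.

End Lead.

Definition avoid (j : nat) (b : proot) :=
  [&& Defs.col b != 1, Defs.col b != j, idx2 b != 1 & idx2 b != j]%N.

Lemma posz_neq_negz (c j : nat) : (0 < j)%N -> (Posz c != (- Posz j)%R).
Proof. by case: j. Qed.
Lemma negz_neq_posz (c j : nat) : (0 < j)%N -> ((- Posz c)%R != Posz j).
Proof. by case: c => [|c]; case: j. Qed.
Lemma oppz_eq (c j : nat) : (((- Posz c)%R == (- Posz j)%R)) = (c == j).
Proof. by rewrite eqr_opp. Qed.
Lemma posz_eq (c j : nat) : (Posz c == Posz j) = (c == j).
Proof. by []. Qed.

Lemma mem_tp t n j b : (1 < j)%N ->
  (b \in tposroots t n j) = (b \in posroots t n) && avoid j b.
Proof.
move=> j1; rewrite /tposroots /Ccol /Rrow !mem_filter.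
case hb: (b \in posroots t n); rewrite ?andbF ?andbT //.
have /and4P [c0 ci _ _] := root_range _ _ _ hb.
rewrite /avoid; case: b hb c0 ci => [a c|a c|a|a] /= hb c0 ci.
- move: hb; rewrite memPM => /and3P [a0 ac _].
  rewrite posz_eq posz_neq_negz ?(ltnW j1) // andbT.
  by rewrite (_ : c != 1) // gtn_eqF // (leq_ltn_trans a0 ac).
- move: hb; rewrite memPP => /and3P [a0 ac _].
  rewrite oppz_eq negz_neq_posz ?(ltnW j1) //.
  by rewrite (_ : c != 1) // gtn_eqF // (leq_ltn_trans a0 ac).
- rewrite (negz_neq_posz 0) ?(ltnW j1) // (posz_neq_negz 0) ?(ltnW j1) //.
  by case: (a != 1); case: (a != j).
- rewrite oppz_eq negz_neq_posz ?(ltnW j1) //.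
  by case: (a != 1); case: (a != j).
Qed.

Lemma idx2_nz t n b : b \in posroots t n -> cf n (vec n b) (idx2 b) != 0%R.
Proof.
move=> hb; rewrite (cf_vec _ _ _ _ hb); move: hb.
case: b => [a c|a c|a|a] /=; rewrite ?memPM ?memPP ?eqxx.
- by move=> /and3P [_ ac _]; rewrite (ltn_eqF ac).
- by move=> /and3P [_ ac _]; rewrite (ltn_eqF ac).
- by [].
- by [].
Qed.

Lemma aperm_inv t n b x : b \in posroots t n -> aperm b (aperm b x) = x.
Proof.
case: b => [a c|a c|a|a] //=; rewrite ?memPM ?memPP => /and3P [_ ac _].
- case: (eqVneq x a) => [->|xa]; first by rewrite ?eqxx (gtn_eqF ac) ?eqxx.
  case: (eqVneq x c) => [->|xc]; first by rewrite ?eqxx.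
  by rewrite (negbTE xa) (negbTE xc).
- case: (eqVneq x a) => [->|xa]; first by rewrite ?eqxx (gtn_eqF ac) ?eqxx.
  case: (eqVneq x c) => [->|xc]; first by rewrite ?eqxx.
  by rewrite (negbTE xa) (negbTE xc).
Qed.

Lemma ip_inj t n L : all (fun b => b \in posroots t n) L -> injective (ip L).
Proof.
elim: L => [_ x y //|b L IH] /=.
move=> /andP [hb hL] x y e.
by apply: (IH hL); rewrite -(aperm_inv _ _ _ (ip L x) hb) e (aperm_inv _ _ _ _ hb).
Qed.

Lemma aperm_range t n b x : b \in posroots t n -> (0 < x <= n)%N ->
  (0 < aperm b x <= n)%N.
Proof.
move=> hb hx; have /and4P [c0 ci i2 _] := root_range _ _ _ hb.
case: b hb c0 ci i2 => [a c|a c|a|a] //= _ c0 ci i2.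
- case: eqP => _; first by rewrite (leq_trans c0 ci) i2.
  by case: eqP => _; rewrite ?c0 ?(leq_trans ci i2).
- case: eqP => _; first by rewrite (leq_trans c0 ci) i2.
  by case: eqP => _; rewrite ?c0 ?(leq_trans ci i2).
Qed.

Lemma ip_range t n L x : all (fun b => b \in posroots t n) L -> (0 < x <= n)%N ->
  (0 < ip L x <= n)%N.
Proof.
elim: L => [|b L IH] //= /andP [hb hL] hx.
exact: aperm_range hb (IH hL hx).
Qed.

Section Avoid.
Variables (t : rtype) (n j : nat).
Hypothesis hj : (1 < j <= n)%N.

Definition inK x := [&& (0 < x <= n)%N, x != 1 & x != j].

Lemma aperm_K b x : b \in posroots t n -> avoid j b -> inK x -> inK (aperm b x).
Proof.
move=> hb /and4P [c1 cj i1 ij] /and3P [hx x1 xj].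
have /and4P [c0 ci i2 _] := root_range _ _ _ hb.
rewrite /inK.
case: b hb c0 ci i2 c1 cj i1 ij => [a c|a c|a|a] //= _ c0 ci i2 c1 cj i1 ij.
- case: eqP => _; first by rewrite (leq_trans c0 ci) i2 i1 ij.
  by case: eqP => _; rewrite ?c0 ?(leq_trans ci i2) ?c1 ?cj ?hx ?x1 ?xj.
- case: eqP => _; first by rewrite (leq_trans c0 ci) i2 i1 ij.
  by case: eqP => _; rewrite ?c0 ?(leq_trans ci i2) ?c1 ?cj ?hx ?x1 ?xj.
- by rewrite hx x1 xj.
- by rewrite hx x1 xj.
Qed.

Lemma aperm_fix b x : avoid j b -> (x == 1) || (x == j) -> aperm b x = x /\ aneg b x = false.
Proof.
move=> /and4P [c1 cj i1 ij] /orP [] /eqP ->;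
case: b c1 cj i1 ij => [a c|a c|a|a] /= c1 cj i1 ij.
all: rewrite ?(eq_sym 1) ?(eq_sym j) ?(negbTE c1) ?(negbTE cj) ?(negbTE i1) ?(negbTE ij) //.
Qed.

Definition goodL L := all (fun b => (b \in posroots t n) && avoid j b) L.

Lemma goodL_pos L : goodL L -> all (fun b => b \in posroots t n) L.
Proof. by elim: L => //= b L IH /andP [/andP [-> _] /IH]. Qed.

Lemma ip_K L x : goodL L -> inK x -> inK (ip L x).
Proof.
elim: L => [|b L IH] //= /andP [/andP [hb ab] hL] hx.
exact: aperm_K hb ab (IH hL hx).
Qed.

Lemma ip_fix L x : goodL L -> (x == 1) || (x == j) -> ip L x = x /\ isg L x = false.
Proof.
elim: L => [|b L IH] //= /andP [/andP [hb ab] hL] hx.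
have [-> ->] := IH hL hx.
by have [-> ->] := aperm_fix b x ab hx.
Qed.

End Avoid.

Lemma avoid_of_orth t n j b : (1 < j <= n)%N -> b \in posroots t n ->
  Defs.col b != 1 -> dot n (vec n b) (vec n (PM 1 j)) = 0%R -> avoid j b.
Proof.
move=> /andP [j1 jn] hb c1.
rewrite dotC dot_vecl.
have /and4P [c0 ci i2 _] := root_range _ _ _ hb.
have lt1 : (1 < Defs.col b)%N by rewrite ltn_neqAle eq_sym c1 c0.
rewrite (low_zero _ _ _ _ hb lt1) sub0r => /eqP; rewrite oppr_eq0 => /eqP hz.
rewrite /avoid c1 /=.
have -> : Defs.col b != j.
  apply/eqP => e; have := lead_pos _ _ _ hb; by rewrite e hz ltxx.
have -> : idx2 b != j.
  apply/eqP => e; have := idx2_nz _ _ _ hb; by rewrite e hz eqxx.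
by rewrite gtn_eqF // (leq_trans lt1 ci).
Qed.

Lemma reduce t n j D : (1 < j <= n)%N -> orthogonal_subset t n D ->
  (forall a, (a \in D) && (a \in Ccol t n 1) = (a == PM 1 j)) ->
  exists L1 L2, [/\ D = L1 ++ PM 1 j :: L2, goodL t n j L1 & goodL t n j L2].
Proof.
move=> hj hD hC.
have hb : PM 1 j \in D by have := hC (PM 1 j); rewrite eqxx => /andP [].
move: hD hC; case/splitPr: hb => L1 L2 hD hC.
move: hD => /and3P [hu hall hpw].
have good : forall b, b \in L1 ++ PM 1 j :: L2 -> b != PM 1 j ->
    dot n (vec n b) (vec n (PM 1 j)) = 0%R -> (b \in posroots t n) && avoid j b.
  move=> b hbD nb ho.
  have hbp : b \in posroots t n by apply: (allP hall).
  rewrite hbp; apply: (avoid_of_orth t n) => //.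
  have := hC b; rewrite hbD (negbTE nb) /= /Ccol mem_filter hbp andbT.
  by move=> ->.
move: hu; rewrite cat_uniq /= negb_or => /and4P [_ /andP [nL1 _] nL2 _].
move: hpw; rewrite pairwise_cat => /and3P [hr _ hp2].
exists L1, L2; split => //; rewrite /goodL; apply/allP => b bL; apply: good.
- by rewrite mem_cat bL.
- by apply: contraNneq nL1 => <-.
- by move/allrelP: hr => /(_ b (PM 1 j) bL (mem_head _ _)) /eqP.
- by rewrite mem_cat inE bL !orbT.
- by apply: contraNneq nL2 => <-.
- move: hp2; rewrite pairwise_cons => /andP [/allP /(_ b bL) /eqP h _].
  by rewrite dotC.
Qed.

Section Contra.
Local Open Scope ring_scope.
Variables (t : rtype) (n : nat).

Lemma small_cf b m : b \in posroots t n -> m != Defs.col b ->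
  cf n (vec n b) m \in [:: -1; 0; 1].
Proof.
move=> hb; rewrite (cf_vec _ _ _ _ hb); case: b hb => [a c|a c|a|a] /= hb.
- by rewrite eq_sym => /negbTE ->; case: (c == m).
- by rewrite eq_sym => /negbTE ->; case: (c == m).
- by rewrite eq_sym => /negbTE ->.
- by rewrite eq_sym => /negbTE ->.
Qed.

Lemma N0 b (v : 'rV[rat]_n) : b \in posroots t n -> v = vec n b ->
  (forall m, cf n v m = 0) -> False.
Proof.
move=> hb -> h; have := lead_pos _ _ _ hb; by rewrite h ltxx.
Qed.

Lemma N1 b (v : 'rV[rat]_n) m : b \in posroots t n -> v = vec n b ->
  (forall k, (k < m)%N -> cf n v k = 0) -> cf n v m < 0 -> False.
Proof.
move=> hb -> hlow hm.
have /and4P [c0 ci _ _] := root_range _ _ _ hb.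
case: (ltngtP (Defs.col b) m) => h.
- by have := lead_pos _ _ _ hb; rewrite hlow // ltxx.
- have : cf n (vec n b) m = 0 by apply: (low_zero _ _ _ _ hb h).
  by move=> e; move: hm; rewrite e ltxx.
- by have := lead_pos _ _ _ hb; rewrite h => /(lt_trans hm); rewrite ltxx.
Qed.

Lemma N2 b (v : 'rV[rat]_n) m1 m2 m3 : b \in posroots t n -> v = vec n b ->
  m1 != m2 -> m1 != m3 -> m2 != m3 ->
  cf n v m1 != 0 -> cf n v m2 != 0 -> cf n v m3 != 0 -> False.
Proof.
move=> hb -> d12 d13 d23 /(support _ _ _ _ hb) h1 /(support _ _ _ _ hb) h2
  /(support _ _ _ _ hb) h3.
move: h1 h2 h3 d12 d13 d23.
by do 3! case/orP => /eqP ->; rewrite ?eqxx.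
Qed.

Lemma N3 b (v : 'rV[rat]_n) m : b \in posroots t n -> v = vec n b ->
  cf n v 1 != 0 -> m != 1%N -> cf n v m \notin [:: -1; 0; 1] -> False.
Proof.
move=> hb -> h1 m1 hm.
have /and4P [c0 ci _ _] := root_range _ _ _ hb.
have c1 : Defs.col b = 1%N.
  move: (support _ _ _ _ hb h1) => /orP [/eqP <-|/eqP e] //.
  by apply/eqP; rewrite eqn_leq c0 andbT e.
by move: hm; rewrite small_cf // c1.
Qed.

End Contra.

Definition isS (j : nat) (b : proot) : bool :=
  match b with
  | PM a c => ((a == 1) && (c < j)) || ((c == j) && (1 < a))
  | _ => false
  end.

Section SVal.
Local Open Scope ring_scope.
Variables (t : rtype) (n j : nat).
Hypothesis hj : (1 < j <= n)%N.

Lemma S_val al : al \in posroots t n ->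
  (vec n (PM 1 j) - vec n al \in [seq vec n b | b <- posroots t n]) = isS j al.
Proof.
move=> hal.
have hbeta : PM 1 j \in posroots t n by rewrite memPM /= hj.
have /andP [j1 jn] := hj.
have j1f : (j == 1%N) = false by rewrite gtn_eqF.
have j1f' : (1 == j)%N = false by rewrite ltn_eqF.
have cfv : forall m, cf n (vec n (PM 1 j) - vec n al) m =
    (1 == m)%:R - (j == m)%:R - cf n (vec n al) m.
  by move=> m; rewrite cfB (cf_vec _ _ _ _ hbeta).
case: al hal cfv => [a c|a c|a|a] hal cfv.
- have /and3P [a0 ac cn] : [&& (0 < a)%N, (a < c)%N & (c <= n)%N] by rewrite -(memPM t).
  have {}cfv m : cf n (vec n (PM 1 j) - vec n (PM a c)) m =
    (1 == m)%:R - (j == m)%:R - ((a == m)%:R - (c == m)%:R).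
    by rewrite cfv (cf_vec _ _ _ _ hal).
  rewrite /isS.
  case: (eqVneq a 1%N) => [a1|a1].
    subst a; rewrite ?eqxx /=.
    case: (ltngtP c j) => hcj /=.
    + apply/mapP; exists (PM c j); first by rewrite memPM hcj jn andbT (ltnW ac).
      by rewrite /= opprB addrC addrA subrK.
    + apply/negbTE/mapP => [[b hb e]].
      apply: (N1 _ _ _ _ j hb e).
        move=> k kj; rewrite cfv (gtn_eqF kj) (gtn_eqF (ltn_trans kj hcj)).
        by case: (1 == k)%N.
      by rewrite cfv eqxx j1f' (gtn_eqF hcj).
    + subst c; apply/negbTE/mapP => [[b hb e]].
      apply: (N0 _ _ _ _ hb e) => m.
      by rewrite cfv; case: (1 == m)%N; case: (j == m).
  have c1f : (c == 1)%N = false by rewrite gtn_eqF // (leq_ltn_trans a0 ac).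
  have a1f : (a == 1)%N = false by apply/negbTE.
  have a1f' : (1 == a)%N = false by rewrite eq_sym.
  case: (eqVneq c j) => [cj|cj].
    subst c; have a1' : (1 < a)%N by rewrite ltn_neqAle eq_sym a1 a0.
    rewrite ?eqxx /= a1'.
    apply/mapP; exists (PM 1 a); first by rewrite memPM a1' (ltnW (leq_trans ac jn)).
    by rewrite /= opprB addrA subrK.
  rewrite /=; apply/negbTE/mapP => [[b hb e]].
  have cjf : (c == j) = false by apply/negbTE.
  case: (eqVneq a j) => [aj|aj].
    subst a; apply: (N3 _ _ _ _ j hb e).
    + by rewrite cfv eqxx j1f c1f.
    + by rewrite j1f.
    + by rewrite cfv eqxx j1f' cjf.
  have ajf : (a == j) = false by apply/negbTE.
  have ajf' : (j == a) = false by rewrite eq_sym.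
  apply: (N2 _ _ _ _ 1%N j a hb e).
  + by rewrite j1f'.
  + by rewrite a1f'.
  + by rewrite ajf'.
  + by rewrite cfv eqxx j1f a1f c1f.
  + by rewrite cfv eqxx j1f' ajf cjf.
  + by rewrite cfv eqxx a1f' ajf' (gtn_eqF ac).
- have /and3P [a0 ac cn] : [&& (0 < a)%N, (a < c)%N & (c <= n)%N] by rewrite -(memPP t).
  have {}cfv m : cf n (vec n (PM 1 j) - vec n (PP a c)) m =
    (1 == m)%:R - (j == m)%:R - ((a == m)%:R + (c == m)%:R).
    by rewrite cfv (cf_vec _ _ _ _ hal).
  rewrite /=; apply/negbTE/mapP => [[b hb e]].
  have c1f : (c == 1)%N = false by rewrite gtn_eqF // (leq_ltn_trans a0 ac).
  case: (eqVneq a 1%N) => [a1|a1].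
    subst a.
    case: (ltngtP c j) => hcj.
    + apply: (N1 _ _ _ _ c hb e).
        move=> k kc; rewrite cfv (gtn_eqF kc) (gtn_eqF (ltn_trans kc hcj)).
        by case: (1 == k)%N.
      by rewrite cfv eqxx (ltn_eqF ac) (gtn_eqF hcj).
    + apply: (N1 _ _ _ _ j hb e).
        move=> k kj; rewrite cfv (gtn_eqF kj) (gtn_eqF (ltn_trans kj hcj)).
        by case: (1 == k)%N.
      by rewrite cfv eqxx j1f' (gtn_eqF hcj).
    + subst c; apply: (N1 _ _ _ _ j hb e).
        move=> k kj; rewrite cfv (gtn_eqF kj).
        by case: (1 == k)%N.
      by rewrite cfv eqxx j1f'.
  have a1f : (a == 1)%N = false by apply/negbTE.
  have a1f' : (1 == a)%N = false by rewrite eq_sym.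
  case: (eqVneq a j) => [aj|aj].
    subst a; apply: (N3 _ _ _ _ j hb e).
    + by rewrite cfv eqxx j1f c1f.
    + by rewrite j1f.
    + by rewrite cfv eqxx j1f' (gtn_eqF ac).
  case: (eqVneq c j) => [cj|cj].
    subst c; apply: (N3 _ _ _ _ j hb e).
    + by rewrite cfv eqxx j1f a1f.
    + by rewrite j1f.
    + by rewrite cfv eqxx j1f' (ltn_eqF ac).
  have ajf : (a == j) = false by apply/negbTE.
  have ajf' : (j == a) = false by rewrite eq_sym.
  have cjf : (c == j) = false by apply/negbTE.
  apply: (N2 _ _ _ _ 1%N j a hb e).
  + by rewrite j1f'.
  + by rewrite a1f'.
  + by rewrite ajf'.
  + by rewrite cfv eqxx j1f a1f c1f.
  + by rewrite cfv eqxx j1f' ajf cjf.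
  + by rewrite cfv eqxx a1f' ajf' (gtn_eqF ac).
- have /andP [a0 an] : (0 < a <= n)%N by move: hal; rewrite memPS; case: t.
  have {}cfv m : cf n (vec n (PM 1 j) - vec n (PS a)) m =
    (1 == m)%:R - (j == m)%:R - (a == m)%:R.
    by rewrite cfv (cf_vec _ _ _ _ hal).
  rewrite /=; apply/negbTE/mapP => [[b hb e]].
  case: (eqVneq a 1%N) => [a1|a1].
    subst a; apply: (N1 _ _ _ _ j hb e).
      move=> k kj; rewrite cfv (gtn_eqF kj).
      by case: (1 == k)%N.
    by rewrite cfv eqxx j1f'.
  have a1f : (a == 1)%N = false by apply/negbTE.
  have a1f' : (1 == a)%N = false by rewrite eq_sym.
  case: (eqVneq a j) => [aj|aj].
    subst a; apply: (N3 _ _ _ _ j hb e).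
    + by rewrite cfv eqxx j1f.
    + by rewrite j1f.
    + by rewrite cfv eqxx j1f'.
  have ajf : (a == j) = false by apply/negbTE.
  have ajf' : (j == a) = false by rewrite eq_sym.
  apply: (N2 _ _ _ _ 1%N j a hb e).
  + by rewrite j1f'.
  + by rewrite a1f'.
  + by rewrite ajf'.
  + by rewrite cfv eqxx j1f a1f.
  + by rewrite cfv eqxx j1f' ajf.
  + by rewrite cfv eqxx a1f' ajf'.
- have /andP [a0 an] : (0 < a <= n)%N by move: hal; rewrite memPL; case: t.
  have {}cfv m : cf n (vec n (PM 1 j) - vec n (PL a)) m =
    (1 == m)%:R - (j == m)%:R - 2%:R * (a == m)%:R.
    by rewrite cfv (cf_vec _ _ _ _ hal).
  rewrite /=; apply/negbTE/mapP => [[b hb e]].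
  case: (eqVneq a 1%N) => [a1|a1].
    subst a; apply: (N1 _ _ _ _ 1%N hb e).
      move=> k k1; rewrite cfv (gtn_eqF k1) (gtn_eqF (ltn_trans k1 j1)).
      by [].
    by rewrite cfv eqxx j1f.
  have a1f : (a == 1)%N = false by apply/negbTE.
  have a1f' : (1 == a)%N = false by rewrite eq_sym.
  case: (eqVneq a j) => [aj|aj].
    subst a; apply: (N3 _ _ _ _ j hb e).
    + by rewrite cfv eqxx j1f.
    + by rewrite j1f.
    + by rewrite cfv eqxx j1f'.
  have ajf : (a == j) = false by apply/negbTE.
  have ajf' : (j == a) = false by rewrite eq_sym.
  apply: (N2 _ _ _ _ 1%N j a hb e).
  + by rewrite j1f'.
  + by rewrite a1f'.
  + by rewrite ajf'.
  + by rewrite cfv eqxx j1f a1f.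
  + by rewrite cfv eqxx j1f' ajf.
  + by rewrite cfv eqxx a1f' ajf'.
Qed.

End SVal.

Lemma count_split (T : Type) (a b : pred T) s :
  count a s = count (fun x => b x && a x) s + count (fun x => ~~ b x && a x) s.
Proof.
elim: s => //= x s ->; case: (b x); case: (a x) => //=.
by rewrite addnS.
Qed.

Lemma sum_count (T : Type) (P : pred T) s : \sum_(x <- s) (P x : nat) = count P s.
Proof. by elim: s => [|x s IH]; rewrite ?big_nil ?big_cons ?IH. Qed.

Section Combine.
Variables (t : rtype) (n j : nat).

Lemma combine_pos s x u y : x != y -> (0 < x <= n)%N -> (0 < y <= n)%N ->
  (combine (s, x) (u, y)).2 \in posroots t n.
Proof.
move=> xy /andP [x0 xn] /andP [y0 yn]; rewrite /combine.
case: ltnP => h; case: (s == u); rewrite /= ?memPM ?memPP ?x0 ?y0 ?h ?xn ?yn //.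
- by rewrite ltn_neqAle h eq_sym xy.
- by rewrite ltn_neqAle h eq_sym xy.
Qed.

Lemma combine_avoid s x u y : inK n j x -> inK n j y ->
  avoid j (combine (s, x) (u, y)).2.
Proof.
move=> /and3P [_ x1 xj] /and3P [_ y1 yj]; rewrite /combine /avoid.
by case: ltnP => h; case: (s == u); rewrite /= ?x1 ?xj ?y1 ?yj.
Qed.

Lemma rimg_pos L al : all (fun b => b \in posroots t n) L -> al \in posroots t n ->
  (rimg L al).2 \in posroots t n.
Proof.
move=> hL hal; case: al hal => [a c|a c|a|a] /= hal.
- move: hal; rewrite memPM => /and3P [a0 ac cn].
  apply: combine_pos.
  + by apply/eqP => /(ip_inj _ _ _ hL) /eqP; rewrite (ltn_eqF ac).
  + by apply: (ip_range t); rewrite // a0 (leq_trans (ltnW ac) cn).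
  + by apply: (ip_range t); rewrite // cn (leq_trans a0 (ltnW ac)).
- move: hal; rewrite memPP => /and3P [a0 ac cn].
  apply: combine_pos.
  + by apply/eqP => /(ip_inj _ _ _ hL) /eqP; rewrite (ltn_eqF ac).
  + by apply: (ip_range t); rewrite // a0 (leq_trans (ltnW ac) cn).
  + by apply: (ip_range t); rewrite // cn (leq_trans a0 (ltnW ac)).
- move: hal; rewrite !memPS; case: t => // ha.
  exact: (ip_range t).
- move: hal; rewrite !memPL; case: t => // ha.
  exact: (ip_range t).
Qed.

Hypothesis hj : (1 < j <= n)%N.

Lemma inK_of_avoid b : b \in posroots t n -> avoid j b ->
  inK n j (Defs.col b) && inK n j (idx2 b).
Proof.
move=> hb /and4P [c1 cj i1 ij].
have /and4P [c0 ci i2 _] := root_range _ _ _ hb.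
by rewrite /inK c0 c1 cj i1 ij (leq_trans ci i2) (leq_trans c0 ci) i2.
Qed.

Lemma rimg_tp L al : goodL t n j L -> al \in tposroots t n j ->
  (rimg L al).2 \in tposroots t n j.
Proof.
have j1 : (1 < j)%N by case/andP: hj.
move=> hL; rewrite !mem_tp // => /andP [hal av].
rewrite (rimg_pos _ _ (goodL_pos _ _ _ _ hL) hal) /=.
have /andP [k1 k2] := inK_of_avoid _ hal av.
case: al hal av k1 k2 => [a c|a c|a|a] hal av k1 k2.
- by apply: combine_avoid; apply: (ip_K t).
- by apply: combine_avoid; apply: (ip_K t).
- have /and3P [_ h1 h2] := ip_K _ _ _ _ _ hL k1.
  by rewrite /avoid /= h1 h2.
- have /and3P [_ h1 h2] := ip_K _ _ _ _ _ hL k1.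
  by rewrite /avoid /= h1 h2.
Qed.

Lemma rimg_eq L L' al :
  (forall s x, inK n j x -> simg L (s, x) = simg L' (s, x)) ->
  inK n j (Defs.col al) -> inK n j (idx2 al) -> rimg L al = rimg L' al.
Proof.
move=> H; case: al => [a c|a c|a|a] k1 k2; rewrite /rimg.
- by rewrite !H.
- by rewrite !H.
- by have := H false a k1; rewrite /simg /= => [[-> ->]].
- by have := H false a k1; rewrite /simg /= => [[-> ->]].
Qed.

End Combine.

Lemma count_posroots t n (P : pred proot) :
  count P (posroots t n) =
  \sum_(i <- iota 1 n) \sum_(k <- iota 1 n | (i < k)%N) (P (PM i k) + P (PP i k))
  + count P (shorts t n).
Proof.
rewrite posrootsE !count_cat !count_map addnA; congr (_ + _).
rewrite -!sum_count /idx_pairs !big_allpairs_dep -big_split /=.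
by apply: eq_bigr => i _; rewrite !big_filter -big_split.
Qed.

Lemma DS_split n (f : nat -> nat -> nat) : (0 < n)%N ->
  \sum_(i <- iota 1 n) \sum_(k <- iota 1 n | (i < k)%N) f i k =
  \sum_(k <- iota 2 n.-1) f 1 k +
  \sum_(i <- iota 2 n.-1) \sum_(k <- iota 1 n | (i < k)%N) f i k.
Proof.
case: n => // n _ /=; rewrite big_cons; congr (_ + _).
rewrite big_cons /= big_seq_cond [RHS]big_seq; apply: eq_bigl => k.
by case: (boolP (k \in iota 2 n)) => //; rewrite mem_iota => /andP [].
Qed.

Lemma inner_eq n j i (f : nat -> nat -> nat) :
  (forall k, (i < k)%N -> (k <= n)%N -> f i k = (k == j)) -> (j <= n)%N ->
  \sum_(k <- iota 1 n | (i < k)%N) f i k = (i < j)%N.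
Proof.
move=> H jn.
rewrite big_seq_cond (eq_bigr (fun k => (k == j) : nat)); last first.
  move=> k /andP [kin ik]; apply: H => //.
  by move: kin; rewrite mem_iota add1n ltnS => /andP [].
rewrite big_mkcond /= (eq_bigr (fun k => ((k \in iota 1 n) && (i < k)%N && (k == j)) : nat)); last first.
  by move=> k _; case: ((k \in iota 1 n) && (i < k)%N).
rewrite sum_count.
case: (ltnP i j) => ij.
- rewrite (eq_count (a2 := pred1 j)); last first.
    move=> k /=; case: eqP => [->|]; rewrite ?andbF ?andbT // ij andbT.
    by rewrite mem_iota add1n ltnS jn (leq_trans _ ij).
  by rewrite count_uniq_mem ?iota_uniq // mem_iota add1n ltnS jn (leq_trans _ ij).
- rewrite (eq_count (a2 := pred0)) ?count_pred0 //.
  move=> k /=; case: eqP => [->|]; rewrite ?andbF //.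
  by rewrite ltnNge ij andbF.
Qed.

Section Main.
Variables (t : rtype) (n j : nat) (L1 L2 : seq proot).
Hypothesis hj : (1 < j <= n)%N.
Hypothesis g1 : goodL t n j L1.
Hypothesis g2 : goodL t n j L2.

Local Notation D := (L1 ++ PM 1 j :: L2).
Local Notation Dt := (L1 ++ L2).

Lemma j1 : (1 < j)%N. Proof. by case/andP: hj. Qed.
Lemma jn : (j <= n)%N. Proof. by case/andP: hj. Qed.

Lemma hbeta : PM 1 j \in posroots t n.
Proof. by rewrite memPM /= hj. Qed.

Lemma gDt : goodL t n j Dt.
Proof. by rewrite /goodL all_cat -!/(goodL _ _ _ _) g1 g2. Qed.

Lemma Dpos : all (fun b => b \in posroots t n) D.
Proof.
by rewrite all_cat /= hbeta (goodL_pos _ _ _ _ g1) (goodL_pos _ _ _ _ g2).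
Qed.

Lemma Dtpos : all (fun b => b \in posroots t n) Dt.
Proof. exact: goodL_pos _ _ _ _ gDt. Qed.

Lemma Dt_eq : [seq a <- D | a \in tposroots t n j] = Dt.
Proof.
have sub L : goodL t n j L -> [seq a <- L | a \in tposroots t n j] = L.
  move=> gL; apply/all_filterP/allP => b hb.
  by rewrite mem_tp ?j1 //; move/allP: gL => /(_ b hb).
rewrite filter_cat /= sub // sub //.
by rewrite mem_tp ?j1 // /avoid /= ?eqxx ?andbF.
Qed.

Lemma simgD_K s x : inK n j x -> simg D (s, x) = simg Dt (s, x).
Proof.
move=> hx; rewrite /simg /= !ip_cat !is_cat /=.
have /and3P [_ y1 yj] := ip_K _ _ _ _ _ g2 hx.
by rewrite (negbTE y1) (negbTE yj) addbF.
Qed.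

Lemma h1 (x y : nat) : (x == x) || (x == y). Proof. by rewrite eqxx. Qed.

Lemma simgD_1 s : simg D (s, 1%N) = (s, j).
Proof.
rewrite /simg /= ip_cat is_cat /=.
have [-> ->] := ip_fix _ _ _ _ 1%N g2 (h1 _ _).
rewrite eqxx.
have h : (j == 1%N) || (j == j) by rewrite eqxx orbT.
have [-> ->] := ip_fix _ _ _ _ j g1 h.
by rewrite !addbF.
Qed.

Lemma simgD_j s : simg D (s, j) = (s, 1%N).
Proof.
rewrite /simg /= ip_cat is_cat /=.
have h : (j == 1%N) || (j == j) by rewrite eqxx orbT.
have [-> ->] := ip_fix _ _ _ _ j g2 h.
rewrite eqxx (gtn_eqF j1).
have [-> ->] := ip_fix _ _ _ _ 1%N g1 (h1 _ _).
by rewrite !addbF.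
Qed.

Lemma rimgD_tp al : al \in tposroots t n j -> rimg D al = rimg Dt al.
Proof.
rewrite mem_tp ?j1 // => /andP [hal av].
have /andP [k1 k2] := inK_of_avoid t n j al hal av.
by apply: (rimg_eq n j) => // s x hx; exact: simgD_K.
Qed.

Lemma E1 : length_sigma t n D = count (fun al => (rimg D al).1) (posroots t n).
Proof.
apply: eq_in_count => al hal /=.
rewrite (sigma_vec t n D al Dpos).
have := rimg_pos t n D al Dpos hal.
case: (rimg D al) => [s b] /= hb.
exact: mem_negroots.
Qed.

Lemma E2 : length_tilde t n j Dt = count (fun al => (rimg Dt al).1) (tposroots t n j).
Proof.
apply: eq_in_count => al hal /=.
rewrite (sigma_vec t n Dt al Dtpos).
have := rimg_tp t n j hj Dt al gDt hal.
case: (rimg Dt al) => [s b] /= hb.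
rewrite (mem_posroots_sub t n) ?negbK //.
by move=> x; rewrite mem_filter => /andP [_ ->].
Qed.

Lemma E4 : count (fun al => (al \in tposroots t n j) && (rimg D al).1) (posroots t n)
  = count (fun al => (rimg Dt al).1) (tposroots t n j).
Proof.
rewrite (eq_in_count (a2 := fun al => (al \in tposroots t n j) && (rimg Dt al).1)); last first.
  move=> al hal /=; case h: (al \in tposroots t n j) => //=.
  by rewrite rimgD_tp.
have e : tposroots t n j = [seq a <- posroots t n | a \in tposroots t n j].
  rewrite {1}/tposroots; apply: eq_in_filter => x hx.
  by rewrite /tposroots mem_filter hx andbT.
rewrite [X in _ = count _ X]e count_filter; apply: eq_count => x /=.
by rewrite andbC.
Qed.

Lemma E5 : size (Sset t n (PM 1 j)) = count (isS j) (posroots t n).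
Proof.
rewrite /Sset size_filter; apply: eq_in_count => al hal.
exact: S_val.
Qed.

End Main.

Section Count.
Variables (t : rtype) (n j : nat) (L1 L2 : seq proot).
Hypothesis hj : (1 < j <= n)%N.
Hypothesis g1 : goodL t n j L1.
Hypothesis g2 : goodL t n j L2.

Local Notation D := (L1 ++ PM 1 j :: L2).
Local Notation Dt := (L1 ++ L2).
Local Notation K := [seq k <- iota 2 n.-1 | k != j].

Lemma n0 : (0 < n)%N.
Proof. by case/andP: hj => h1 h2; apply: leq_trans h2; apply: ltnW. Qed.

Lemma memK k : (k \in K) = inK n j k.
Proof.
rewrite mem_filter mem_iota /inK.
have -> : (2 + n.-1 = n.+1)%N by rewrite add2n prednK // n0.
by case: k => [|[|k]] /=; rewrite ?andbF // andbC.
Qed.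

Lemma jK : j \in iota 2 n.-1.
Proof.
case/andP: hj => h1 h2.
by rewrite mem_iota h1 add2n prednK ?n0 // ltnS.
Qed.

Lemma perm_ipK : count (fun k => (ip Dt k < j)%N) K = count (fun k => (k < j)%N) K.
Proof.
have gDt := gDt t n j L1 L2 g1 g2.
have hDt := goodL_pos _ _ _ _ gDt.
have uK : uniq K by rewrite filter_uniq // iota_uniq.
have hu : uniq (map (ip Dt) K) by rewrite (map_inj_uniq (ip_inj _ _ _ hDt)).
have sub : {subset map (ip Dt) K <= K}.
  move=> x /mapP [k hk ->]; rewrite memK; apply: (ip_K t) => //.
  by rewrite -memK.
have hs : (size K <= size (map (ip Dt) K))%N by rewrite size_map.
have [_ eqm] := uniq_min_size hu sub hs.
have hp : perm_eq (map (ip Dt) K) K by apply: uniq_perm.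
rewrite -(count_map (ip Dt) (fun k => (k < j)%N)).
by move/permP: hp => /(_ (fun k => (k < j)%N)).
Qed.

Lemma C2 : count (isS j) (posroots t n) =
  (count (fun k => (k < j)%N) K + \sum_(i <- iota 2 n.-1) (i < j)%N)%N.
Proof.
rewrite count_posroots.
have -> : count (isS j) (shorts t n) = 0%N.
  by rewrite /shorts; case: t => //=; elim: (iota 1 n).
rewrite addn0 DS_split ?n0 //; congr (_ + _)%N.
- rewrite (eq_bigr (fun k => (k < j)%N : nat)); last first.
    by move=> k _; rewrite /= andbF orbF addn0.
  rewrite sum_count count_filter; apply: eq_count => k /=.
  by case h: (k < j)%N; rewrite /= ?(ltn_eqF h).
- rewrite big_seq [RHS]big_seq; apply: eq_bigr => i hi.
  apply: (inner_eq n j i (fun i k => isS j (PM i k) + isS j (PP i k)))%N; last by case/andP: hj.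
  move=> k ik kn /=.
  move: hi; rewrite mem_iota => /andP [i2 _].
  by rewrite (gtn_eqF i2) i2 andbT addn0.
Qed.

Local Notation P1 := (fun al => (al \notin tposroots t n j) && (rimg D al).1).

Lemma jgt1 : (1 < j)%N. Proof. by case/andP: hj. Qed.

Lemma ipK k : inK n j k -> inK n j (ip Dt k).
Proof. by move=> hk; apply: (ip_K t) => //; exact: gDt. Qed.

Lemma V1 k : inK n j k -> (P1 (PM 1 k) + P1 (PP 1 k))%N = (ip Dt k < j)%N.
Proof.
move=> hk.
rewrite /rimg !(simgD_1 t n j L1 L2 g1 g2) !(simgD_K t n j L1 L2 g2) // /simg /=.
rewrite !mem_tp ?jgt1 // /avoid /= !andbF /=.
have /and3P [_ _ mj] := ipK k hk.
case: (ltnP j (ip Dt k)) => h /=.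
  by rewrite ltnNge (ltnW h).
have -> : (ip Dt k < j)%N by rewrite ltn_neqAle mj h.
by case: (isg Dt k).
Qed.

Lemma V1j : (P1 (PM 1 j) + P1 (PP 1 j))%N = 1%N.
Proof.
rewrite /rimg !(simgD_1 t n j L1 L2 g1 g2) !(simgD_j t n j L1 L2 hj g1 g2) /simg /=.
rewrite !mem_tp ?jgt1 // /avoid /= !andbF /=.
by rewrite ltnNge (ltnW jgt1).
Qed.

Lemma V2 i k : (2 <= i)%N -> (i < k)%N -> (k <= n)%N ->
  (P1 (PM i k) + P1 (PP i k))%N = (k == j).
Proof.
move=> i2 ik kn.
have i1 : (i != 1)%N by rewrite gtn_eqF.
have k1 : (k != 1)%N by rewrite gtn_eqF // (leq_trans i2 (ltnW ik)).
case: (eqVneq k j) => [ej|kj].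
  subst k.
  have hi : inK n j i by rewrite /inK i1 (ltn_eqF ik) (leq_trans _ i2) // (leq_trans (ltnW ik) kn).
  rewrite /rimg !(simgD_K t n j L1 L2 g2 _ i) // !(simgD_j t n j L1 L2 hj g1 g2) /simg /=.
  rewrite !mem_tp ?jgt1 // /avoid /= eqxx !andbF /=.
  have /and3P [/andP [m0 _] _ _] := ipK i hi.
  by rewrite ltnNge m0.
case: (eqVneq i j) => [ei|ij].
  subst i.
  have hk : inK n j k by rewrite /inK k1 kj kn (leq_trans _ ik).
  rewrite /rimg !(simgD_K t n j L1 L2 g2 _ k) // !(simgD_j t n j L1 L2 hj g1 g2) /simg /=.
  have /and3P [/andP [m0 _] m1 _] := ipK k hk.
  have -> : (1 < ip Dt k)%N by rewrite ltn_neqAle eq_sym m1 m0.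
  by rewrite /= !andbF.
have i0 : (0 < i)%N by rewrite (leq_trans _ i2).
rewrite !mem_tp ?jgt1 // memPM memPP i0 ik kn /avoid /= i1 ij k1 kj.
by [].
Qed.

Lemma shorts_inv x : x \in shorts t n ->
  exists a, ((x == PS a) || (x == PL a)) && (0 < a <= n)%N.
Proof.
rewrite /shorts; case: t => // /mapP [a ha ->]; exists a;
  by rewrite eqxx /= ?orbT; move: ha; rewrite mem_iota add1n ltnS.
Qed.

Lemma V3 : count P1 (shorts t n) = 0%N.
Proof.
rewrite (eq_in_count (a2 := pred0)) ?count_pred0 // => x hx /=.
have hxp : x \in posroots t n by rewrite posrootsE !mem_cat hx !orbT.
have [a /andP [hxa ha]] := shorts_inv x hx.
have isg1 : isg D 1 = false.
  by have := simgD_1 t n j L1 L2 g1 g2 false; rewrite /simg /= => [[->]].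
have isgj : isg D j = false.
  by have := simgD_j t n j L1 L2 hj g1 g2 false; rewrite /simg /= => [[->]].
have key : (a == 1%N) || (a == j) \/ (x \in tposroots t n j).
  case: (boolP ((a == 1%N) || (a == j))) => h; [by left | right].
  rewrite mem_tp ?jgt1 // hxp /=; move: h; rewrite negb_or => /andP [a1 aj].
  by case/orP: hxa => /eqP ->; rewrite /avoid /= a1 aj.
case: key => [h|h]; last by rewrite h.
by case/orP: hxa => /eqP ->; case/orP: h => /eqP ->; rewrite /= ?isg1 ?isgj andbF.
Qed.

Lemma C1 : count P1 (posroots t n) =
  (1 + count (fun k => (k < j)%N) K + \sum_(i <- iota 2 n.-1) (i < j)%N)%N.
Proof.
rewrite count_posroots V3 addn0 DS_split ?n0 //; congr (_ + _)%N.
- rewrite (bigD1_seq j) ?jK ?iota_uniq // V1j; congr (_ + _)%N.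
  rewrite -big_filter big_seq (eq_bigr (fun k => (ip Dt k < j)%N : nat)); last first.
    by move=> k; rewrite memK => hk; rewrite V1.
  by rewrite -big_seq sum_count perm_ipK.
- rewrite big_seq [RHS]big_seq; apply: eq_bigr => i hi.
  apply: (inner_eq n j i (fun i k => P1 (PM i k) + P1 (PP i k)))%N; last by case/andP: hj.
  move=> k ik kn; apply: V2 => //.
  by move: hi; rewrite mem_iota => /andP [].
Qed.

End Count.

Theorem lemma3p2 (t : rtype) (n j : nat) (D : seq proot) :
  (1 < j <= n)%N ->
  orthogonal_subset t n D ->
  (forall a, (a \in D) && (a \in Ccol t n 1) = (a == PM 1 j)) ->
  length_sigma t n D =
    (length_tilde t n j [seq a <- D | a \in tposroots t n j]
     + size (Sset t n (PM 1 j)) + 1)%N.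
Proof.
move=> hj hD hC.
have [L1 [L2 [-> g1 g2]]] := reduce t n j D hj hD hC.
rewrite (Dt_eq t n j L1 L2 hj g1 g2) (E1 t n j L1 L2 hj g1 g2)
  (E2 t n j L1 L2 hj g1 g2) (E5 t n j hj).
rewrite (count_split _ _ (fun al => al \in tposroots t n j)).
rewrite (E4 t n j L1 L2 hj g2) (C1 t n j L1 L2 hj g1 g2) (C2 t n j hj).
set A := count _ _; set X := count _ _; set Y := \sum_(_ <- _) _.
by rewrite !addnA (addnAC A 1) (addnAC (A + X) 1).
Qed.
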